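(* In the setting and construction described in the context, let $n\in\mathbb{N}$, $k\in\mathbb{N}\cup\{0\}$ and $x\in Z(p_n,\dots,p_{n+k})$. Then there exist pairwise disjointly supported vectors $(y_j)_{j=0}^k$ in $c_{00}$ such that $x=\sum_{j=0}^ky_j$, $\|y_j\|_{\ell^1}=\theta_{p_{n+j}}^{-1}$ for $0\le j\le k$, and $\operatorname{supp}y_j\in[\mathcal{S}_{\eta_n+1},\dots,\mathcal{S}_{\eta_{n+j}+1}]\cap[M_{n+j}]^{<\infty}$ for $0\le j\le k$.
   Context: Standing setting: $(\theta_n)$ nonincreasing null in $(0,1)$; $(\mathcal{F}_n)$ regular families (hereditary, spreading, compact in $[\mathbb{N}]^{<\infty}\subseteq 2^{\mathbb{N}}$); $X=T[(\theta_n,\mathcal{F}_n)]$ as usual (completion of $c_{00}$ under $\|x\|=\max\{\|x\|_{c_0},\sup_n\sup\theta_n\sum_i\|E_ix\|\}$ over $\mathcal{F}_n$-admissible $(E_i)$, i.e. $E_1<\dots<E_k$ with $\{\min E_i\}\in\mathcal{F}_n$); $(e_k)$ unit vectors. $\alpha_n=\iota(\mathcal{F}_n)>1$ (Cantor–Bendixson index), $\alpha=\sup\alpha_n\ne\alpha_n$ for all $n$, $\alpha=\omega^{\omega^\xi}$, $0<\xi<\omega_1$. Schreier families: $\mathcal{S}_0$ = singletons and $\emptyset$, $\mathcal{S}_1=\{F:|F|\le\min F\}$, $\mathcal{S}_{\beta+1}=\mathcal{S}_1[\mathcal{S}_\beta]$, limit $\beta$: $\mathcal{S}_\beta=\{F\in\mathcal{S}_{\beta_k}\text{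 some }k\le\min F\}$ for a fixed $\beta_k\uparrow\beta$. $\mathcal{M}[\mathcal{N}]$ = unions of $\mathcal{M}$-admissible sequences of members of $\mathcal{N}$; $[\mathcal{M}_1]=\mathcal{M}_1$, $[\mathcal{M}_1,\dots,\mathcal{M}_{i+1}]=[\mathcal{M}_1,\dots,\mathcal{M}_i][\mathcal{M}_{i+1}]$, empty list gives $\mathcal{S}_0$. $\|y\|_{\mathcal{F}}=\sup_{F\in\mathcal{F}}\sum_{k\in F}|y_k|$. $\ell(\beta)$ = leading exponent of the Cantor normal form. $\gamma(\varepsilon,m)=\max\{\ell(\alpha_{n_s}\cdots\alpha_{n_1}):\varepsilon\theta_{n_1}\cdots\theta_{n_s}>\theta_m\}$ ($\max\emptyset=0$). Assume $(\dagger)$: there is $\varepsilon>0$ such that for every $\beta<\omega^\xi$ some $m$ has $\gamma(\varepsilon,m)+2+\beta<\ell(\alpha_m)$; fix such $\varepsilon\in(0,1)$. $K_{\delta,p,\eta}=\{(0,n_1,\dots,n_s):s\ge0,\ \theta_{n_1}\cdots\theta_{n_s}>\delta\theta_p,\ \ell(\alpha_{n_s}\cdots\alpha_{n_1})<\eta\}$ (finite). Construction: $(\beta_n)$ is the sequence increasing to $\omega^\xi$ defining $\mathcal{S}_{\omega^\xi}$; $M_0$ infinite. Choose $p_1$ with $\theta_{p_1}\le\varepsilon^2/4$ and $\gamma(\varepsilon,p_1)+2+\beta_1<\ell(\alpha_{p_1})$, $\eta_1=\gamma(\varepsilon,p_1)+1$, $q_1$ with $\theta_{q_1}\le\varepsilon\theta_{p_1}/4$,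 infinite $M_1\subseteq M_0$ with $\mathcal{S}_{\beta_1}[\mathcal{S}_{\eta_1+1}]\cap[M_1]^{<\infty}\subseteq\mathcal{F}_{p_1}$ and $[\mathcal{F}_{n_1},\dots,\mathcal{F}_{n_s}]\cap[M_1]^{<\infty}\subseteq\mathcal{S}_{\eta_1}$ for all $(0,n_1,\dots,n_s)\in K_{4^{-1},p_1,\eta_1}$. For $n\ge2$: $p_n>q_{n-1}$ with $\theta_{p_n}\le\varepsilon^2/4^n$ and $\gamma(\varepsilon,p_n)+2+\gamma(\varepsilon,q_{n-1})+2+\eta_{n-1}+1+\dots+\eta_1+1+\beta_n<\ell(\alpha_{p_n})$; $\eta_n=\gamma(\varepsilon,p_n)+\gamma(\varepsilon,q_{n-1})+1$; $q_n>p_n$ with $\theta_{q_n}\le\varepsilon\theta_{p_n}/4^n$; infinite $M_n\subseteq M_{n-1}$ with $\mathcal{S}_{\beta_n}[\mathcal{S}_{\eta_1+1},\dots,\mathcal{S}_{\eta_n+1}]\cap[M_n]^{<\infty}\subseteq\mathcal{F}_{p_n}$ and $[\mathcal{F}_{n_1},\dots,\mathcal{F}_{n_s}]\cap[M_n]^{<\infty}\subseteq\mathcal{S}_{\eta_n}$ for all $(0,n_1,\dots,n_s)\in K_{4^{-n},p_n,\eta_n}$. $Z(p_n)$ is the set of $x\in c_{00}$ with $\|x\|_{\ell^1}=\theta_{p_n}^{-1}$, $\operatorname{supp}x\in\mathcal{S}_{\eta_n+1}\cap[M_n]^{<\infty}$, and $\|x\|_{\mathcal{S}_{\eta_n}}\le4^{-n}(|K_{4^{-n},p_n,\eta_n}|+1)^{-1}$.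 Inductively, $Z(p_n,\dots,p_{n+k})$ ($k\ge1$) is the set of vectors $\theta_{p_n}^{-1}\sum_{i=1}^ra_ie_{m_i}+\sum_{i=1}^ra_iz_i$ with $m_1<\operatorname{supp}z_1<\dots<m_r<\operatorname{supp}z_r$, $\theta_{p_n}^{-1}\sum_ia_ie_{m_i}\in Z(p_n)$ and $z_i\in Z(p_{n+1},\dots,p_{n+k})$. *)

(* Defs.v *)
From HB Require Import structures.
From mathcomp Require Import all_boot all_order all_algebra.
From mathcomp Require Import finmap.
From mathcomp Require Import reals.
Set Implicit Arguments.
Unset Strict Implicit.
Unset Printing Implicit Defensive.
Import Order.TTheory GRing.Theory Num.Theory.
Local Open Scope fset_scope.
Local Open Scope ring_scope.

(* Countable ordinals as Brouwer trees; a limit [OLim f] carries its fixed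
   approximating sequence (f k)_{k>=1} (f 0 is ignored). *)
Inductive cord : Type := OZero | OSucc of cord | OLim of (nat -> cord).

Definition family := {fset nat} -> Prop.

Definition set_lt (E F : {fset nat}) : Prop :=
  forall a b, a \in E -> b \in F -> (a < b)%N.

Definition is_min (m : nat) (E : {fset nat}) : Prop :=
  m \in E /\ forall l, l \in E -> (m <= l)%N.

Definition schreier0 : family := fun F => (#|` F| <= 1)%N.
Definition schreier1 : family := fun F => forall m, m \in F -> (#|` F| <= m)%N.

(* A[B] : unions of A-admissible sequences E_1 < ... < E_r of members of B
   (A-admissible: {min E_i} in A). *)
Definition compose (A B : family) : family := fun F =>
  exists (Es : seq {fset nat}) (ms : seq nat),
    size ms = size Es /\
    (forall i, (i < size Es)%N ->
       is_min (nth 0%N ms i) (nth fset0 Es i) /\ B (nth fset0 Es i)) /\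
    (forall i j, (i < j)%N -> (j < size Es)%N ->
       set_lt (nth fset0 Es i) (nth fset0 Es j)) /\
    (forall l, l \in F <-> exists2 E, E \in Es & l \in E) /\
    A [fset m | m in ms].

Fixpoint schreier (b : cord) : family :=
  match b with
  | OZero => schreier0
  | OSucc b' => compose schreier1 (schreier b')
  | OLim f => fun F => F = fset0 \/
      exists k, (1 <= k)%N /\ (forall m, m \in F -> (k <= m)%N) /\ schreier (f k) F
  end.

(* [M_1, ..., M_i] with [M_1,...,M_{i+1}] = [M_1,...,M_i][M_{i+1}],
   empty list giving S_0. *)
Definition iter_comp (l : seq family) : family :=
  match l with
  | [::] => schreier0
  | A :: l' => foldl compose A l'
  end.

Definition supp_is {R : realType} (x : nat -> R) (F : {fset nat}) : Prop :=
  forall l, (l \in F) = (x l != 0).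

Section Z.
Variables (R : realType) (theta : nat -> R) (p : nat -> nat) (eta : nat -> cord)
          (M : nat -> pred nat) (c : nat -> R).

(* Z(p_n); c n stands for 4^{-n}(|K_{4^{-n},p_n,eta_n}|+1)^{-1} *)
Definition Zbase (n : nat) (x : nat -> R) : Prop :=
  exists F : {fset nat}, supp_is x F /\
    \sum_(l <- F) `|x l| = (theta (p n))^-1 /\
    schreier (OSucc (eta n)) F /\
    (forall l, l \in F -> M n l) /\
    (forall G, schreier (eta n) G -> \sum_(l <- G) `|x l| <= c n).

(* Zset k n = Z(p_n, ..., p_{n+k}) *)
Fixpoint Zset (k n : nat) (x : nat -> R) : Prop :=
  match k with
  | 0 => Zbase n x
  | k'.+1 => exists (r : nat) (a : nat -> R) (m : nat -> nat) (z : nat -> nat -> R),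
      (forall i, (i < r)%N -> Zset k' n.+1 (z i)) /\
      (forall i, (i.+1 < r)%N -> (m i < m i.+1)%N) /\
      (forall i l, (i < r)%N -> z i l != 0 ->
          (m i < l)%N /\ ((i.+1 < r)%N -> (l < m i.+1)%N)) /\
      Zbase n (fun l => (theta (p n))^-1 * \sum_(i < r | m i == l) a i) /\
      x = (fun l => (theta (p n))^-1 * \sum_(i < r | m i == l) a i
                    + \sum_(i < r) a i * z i l)
  end.
End Z.

(* Main.v *)
Require Import Defs.
From HB Require Import structures.
From mathcomp Require Import all_boot all_order all_algebra.
From mathcomp Require Import finmap.
From mathcomp Require Import reals.
From mathcomp Require Import zify ring lra.
Import Order.TTheory GRing.Theory Num.Theory.
Local Open Scope fset_scope.
Set Implicit Arguments. Unset Strict Implicit.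
Definition set_ltb (E F : {fset nat}) : bool := all (fun a => all (fun b => (a < b)%N) F) E.
Lemma set_ltP E F : reflect (set_lt E F) (set_ltb E F).
Proof.
apply: (iffP allP) => [H a b aE bF|H a aE]; first by have /allP := H a aE; apply.
by apply/allP => b bF; apply: H.
Qed.

Definition C2body (A B : Defs.family) (F : {fset nat}) (Ps : seq (nat * {fset nat})) : Prop :=
  (forall P, P \in Ps -> is_min P.1 P.2 /\ B P.2) /\
  pairwise (fun P Q => set_ltb P.2 Q.2) Ps /\
  (forall l, l \in F <-> exists2 P, P \in Ps & l \in P.2) /\
  A [fset m | m in map fst Ps].

Definition C2 (A B : Defs.family) (F : {fset nat}) : Prop := exists Ps, C2body A B F Ps.

Lemma compose_C2 A B F : compose A B F <-> C2 A B F.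
Proof.
split.
- case=> Es [ms [Hs [Hi [Hlt [Hu HA]]]]].
  exists (zip ms Es); split; [|split; [|split]].
  + move=> P /(nthP (0%N, fset0)) [i]; rewrite size_zip Hs minnn => ilt <-.
    by rewrite nth_zip //=; apply: Hi.
  + apply/(pairwiseP (0%N, fset0)) => i j; rewrite !inE size_zip Hs minnn => ilt jlt ij.
    by rewrite !nth_zip //=; apply/set_ltP; apply: Hlt.
  + move=> l; rewrite Hu; split.
    * case=> E /(nthP fset0) [i ilt <-] lE; exists (nth 0%N ms i, nth fset0 Es i) => //.
      rewrite -nth_zip //; apply: mem_nth; by rewrite size_zip Hs minnn.
    * case=> P PZ lP; exists P.2 => //.
      have -> : Es = unzip2 (zip ms Es) by rewrite unzip2_zip // Hs.
      by apply: map_f.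
  + have E1 := @unzip1_zip _ _ ms Es; rewrite /unzip1 in E1; by rewrite E1 ?Hs.
- case=> Ps [Hi [Hpw [Hu HA]]].
  exists (map snd Ps), (map fst Ps); split; first by rewrite !size_map.
  split; [|split; [|split]] => //.
  + move=> i; rewrite size_map => ilt.
    rewrite !(nth_map (0%N, fset0)) //; apply: Hi; exact: mem_nth.
  + move=> i j ij; rewrite size_map => jlt.
    rewrite !(nth_map (0%N, fset0)) //; last exact: ltn_trans ij jlt.
    apply/set_ltP; move/(pairwiseP (0%N, fset0)): Hpw; apply => //.
    by rewrite inE (ltn_trans ij jlt).
  + move=> l; rewrite Hu; split.
    * case=> P PP lP; exists P.2 => //; exact: map_f.
    * by case=> E /mapP [P PP ->] lE; exists P.
Qed.
Lemma seq_choice (T : eqType) (U : Type) (d : U) (R : T -> U -> Prop) (s : seq T) :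
  (forall x, x \in s -> exists y, R x y) -> exists f : T -> U, forall x, x \in s -> R x (f x).
Proof.
elim: s => [|a s IH] H; first by exists (fun _ => d).
have [f Hf] : exists f : T -> U, forall x, x \in s -> R x (f x).
  by apply: IH => x xs; apply: H; rewrite inE xs orbT.
have [y Hy] := H a (mem_head _ _).
exists (fun x => if x == a then y else f x) => x; rewrite inE.
by case: eqP => [-> _|_ /= xs]; [|apply: Hf].
Qed.



Lemma allrelP' (U : eqType) (r : rel U) xs ys :
  reflect (forall x y, x \in xs -> y \in ys -> r x y) (allrel r xs ys).
Proof.
apply: (iffP allP) => [H x y xx yy|H x xx]; first by have /allP := H x xx; apply.
by apply/allP => y yy; apply: H.
Qed.

Lemma pw_flat (T : eqType) (U : eqType) (r : rel U) (f : T -> seq U) (s : seq T) :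
  (forall x, x \in s -> pairwise r (f x)) ->
  pairwise (fun x y => allrel r (f x) (f y)) s -> pairwise r (flatten (map f s)).
Proof.
elim: s => [|a s IH] //= H /andP [Ha Hs].
rewrite pairwise_cat H ?mem_head // IH ?andbT //; last first.
  by move=> x xs; apply: H; rewrite inE xs orbT.
apply/allrelP' => u v uf /flattenP [w /mapP [x xs ->] vx].
by move/allP: Ha => /(_ x xs) /allrelP'; apply.
Qed.

Lemma min_sub (m : nat) E F : is_min m F -> E `<=` F -> forall l, l \in E -> (m <= l)%N.
Proof. by move=> [_ H] /fsubsetP sub l /sub; apply: H. Qed.

Lemma assoc_C2 A B C F : C2 A (compose B C) F -> C2 (compose A B) C F.
Proof.
case=> Ps [Hi [Hpw [Hu HA]]].
have [Qs HQ] : exists Qs : nat * {fset nat} -> seq (nat * {fset nat}),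
   forall P, P \in Ps -> C2body B C P.2 (Qs P).
  apply: (@seq_choice _ (seq (nat * {fset nat})) [::] (fun P Qs => C2body B C P.2 Qs) Ps) => P /Hi [_ /compose_C2 [Qs HQ]]; by exists Qs.
have sub : forall P Q, P \in Ps -> Q \in Qs P -> Q.2 `<=` P.2.
  move=> P Q PP QQ; apply/fsubsetP => l lQ.
  have [_ [_ [H _]]] := HQ P PP; apply/H; by exists Q.
exists (flatten (map Qs Ps)); split; [|split; [|split]].
- move=> Q /flattenP [s /mapP [P PP ->] QQ].
  have [H _] := HQ P PP; exact: H.
- apply: pw_flat => [P PP|]; first by have [_ [H _]] := HQ P PP.
  apply: (@sub_in_pairwise _ (mem Ps) _ _ _ Ps); last 1 [exact: Hpw]; last 1 [by apply/allP].
  move=> {Hpw}.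
  move=> P P' PP PP' /set_ltP lt; apply/allrelP' => Q Q' QQ QQ'.
  apply/set_ltP => a b aQ bQ'; apply: lt.
    by move/fsubsetP: (sub P Q PP QQ); apply.
  by move/fsubsetP: (sub P' Q' PP' QQ'); apply.
- move=> l; rewrite Hu; split.
  + case=> P PP /(proj1 ((proj1 (proj2 (proj2 (HQ P PP)))) l)) [Q QQ lQ].
    exists Q => //; apply/flattenP; exists (Qs P) => //; exact: map_f.
  + case=> Q /flattenP [s /mapP [P PP ->] QQ] lQ; exists P => //.
    by move/fsubsetP: (sub P Q PP QQ); apply.
- apply/compose_C2.
  exists (map (fun P => (P.1, [fset m | m in map fst (Qs P)])) Ps).
  split; [|split; [|split]].
  + move=> P'' /mapP [P PP ->] /=.
    have [HQi [_ [HQu HB]]] := HQ P PP.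
    split => //.
    have [Pmin _] := Hi P PP.
    have Tsub : forall t, t \in [fset m | m in map fst (Qs P)] -> (P.1 <= t)%N.
      move=> t; rewrite inE => /mapP [Q QQ ->].
      apply: (min_sub Pmin (sub P Q PP QQ)); exact: (HQi Q QQ).1.1.
    split => //.
    have [Q QQ P1Q] := (proj1 (HQu P.1)) Pmin.1.
    have e : Q.1 = P.1.
      apply/eqP; rewrite eqn_leq; apply/andP; split; first exact: (HQi Q QQ).1.2.
      apply: (min_sub Pmin (sub P Q PP QQ)); exact: (HQi Q QQ).1.1.
    by rewrite inE -e; apply: map_f.
  + rewrite pairwise_map.
    apply: (@sub_in_pairwise _ (mem Ps) _ _ _ Ps); last 1 [exact: Hpw]; last 1 [by apply/allP].
  move=> {Hpw}.
    move=> P P' PP PP' /set_ltP lt /=; apply/set_ltP => a b.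
    rewrite !inE => /mapP [Q QQ ->] /mapP [Q' QQ' ->]; apply: lt.
      move/fsubsetP: (sub P Q PP QQ); apply; exact: ((proj1 (HQ P PP)) Q QQ).1.1.
    move/fsubsetP: (sub P' Q' PP' QQ'); apply; exact: ((proj1 (HQ P' PP')) Q' QQ').1.1.
  + move=> t; rewrite inE; split.
    * move=> /mapP [Q /flattenP [s /mapP [P PP ->] QQ] ->].
      exists (P.1, [fset m | m in map fst (Qs P)]); first by apply: (map_f (fun P => (P.1, _)) PP).
      by rewrite /= inE; apply: map_f.
    * case=> P'' /mapP [P PP ->]; rewrite /= inE => /mapP [Q QQ ->].
      apply: map_f; apply/flattenP; exists (Qs P) => //; exact: map_f.
  + by rewrite -map_comp.
Qed.
Lemma compose_monoA (A A' B : Defs.family) F : (forall G, A G -> A' G) -> compose A B F -> compose A' B F.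
Proof.
move=> H [Es [ms [? [? [? [? HA]]]]]]; exists Es, ms; do 4! (split => //); exact: H.
Qed.

Lemma foldl_mono l : forall (A A' : Defs.family) F, (forall G, A G -> A' G) ->
  foldl compose A l F -> foldl compose A' l F.
Proof.
elim: l => [|B l IH] A A' F H //=; first exact: H.
apply: IH => G; exact: compose_monoA.
Qed.

Lemma foldl_assoc l : forall (A0 A1 : Defs.family) F,
  compose A0 (foldl compose A1 l) F -> foldl compose (compose A0 A1) l F.
Proof.
elim: l => [|B l IH] A0 A1 F //= H.
apply: (@foldl_mono _ (compose A0 (compose A1 B))).
  move=> G /compose_C2 /assoc_C2 /compose_C2; done.
exact: IH.
Qed.

Lemma imfset_map (h : nat -> nat) (s : seq nat) :
  [fset m | m in map h s] = h @` [fset m | m in s].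
Proof.
apply/fsetP => x; rewrite inE; apply/mapP/imfsetP => [[y ys ->]|[y]].
  by exists y => //; rewrite /= inE.
by rewrite /= inE => ys ->; exists y.
Qed.

Lemma spread b : forall F (h : nat -> nat), schreier b F ->
  (forall a, a \in F -> (a <= h a)%N) ->
  (forall a c, a \in F -> c \in F -> (a < c)%N -> (h a < h c)%N) ->
  schreier b (h @` F).
Proof.
elim: b => [|b IH|f IH] F h.
- rewrite /= /schreier0 => HF _ _; apply: leq_trans HF; exact: leq_imfset_card.
- move=> /compose_C2 [Ps [Hi [Hpw [Hu HA]]]] H1 H2; apply/compose_C2.
  have subF : forall P a, P \in Ps -> a \in P.2 -> a \in F.
    by move=> P a PP aP; apply/Hu; exists P.
  exists (map (fun P => (h P.1, h @` P.2)) Ps); split; [|split; [|split]].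
  + move=> P'' HP; have [P PP ->] := elimT (@mapP _ _ (fun P : nat * {fset nat} => (h P.1, h @` P.2)) Ps P'') HP.
    have [[m1 m2] HB] := Hi P PP.
    split; last first.
      apply: (IH P.2 h HB); [move=> a aP; apply: H1 | move=> a c aP cP; apply: H2] => //;
        by apply: (subF P) || apply: subF cP.
    split; first exact: in_imfset.
    move=> l /imfsetP [a aP ->].
    have := m2 a aP; rewrite leq_eqVlt => /orP [/eqP ->//|lt].
    apply: ltnW; apply: H2 => //; [exact: subF m1 | exact: subF aP].
  + suff : pairwise (relpre (fun P : nat * {fset nat} => (h P.1, h @` P.2)) (fun P Q : nat * {fset nat} => set_ltb P.2 Q.2)) Ps.
      by rewrite -pairwise_map.
    apply: (@sub_in_pairwise _ (mem Ps) _ _ _ Ps); last 1 [exact: Hpw]; last 1 [by apply/allP].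
    move=> P P' PP PP' /set_ltP lt /=; apply/set_ltP => x y.
    move=> /imfsetP [a aP ->] /imfsetP [c cP ->]; apply: H2; [exact: subF aP|exact: subF cP|].
    exact: lt.
  + move=> l; split.
    * move=> /imfsetP [a /Hu [P PP aP] ->]; exists (h P.1, h @` P.2).
        exact: (@map_f _ _ (fun P : nat * {fset nat} => (h P.1, h @` P.2)) Ps P PP).
      exact: in_imfset.
    * case=> P'' HP; have [P PP ->] := elimT (@mapP _ _ (fun P : nat * {fset nat} => (h P.1, h @` P.2)) Ps P'') HP.
      move=> /imfsetP [a aP ->]; apply: in_imfset.
      exact: subF aP.
  + rewrite -map_comp.
    have -> : [seq (fst \o (fun P => (h P.1, h @` P.2))) i | i <- Ps] = map h (map fst Ps).
      by rewrite -map_comp.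
    rewrite imfset_map => m /imfsetP [m0 m0S ->].
    apply: leq_trans (H1 m0 _); last first.
      move: m0S; rewrite inE => /mapP [P PP ->]; apply: (subF P) => //; exact: (Hi P PP).1.1.
    apply: leq_trans (HA m0 m0S); exact: leq_imfset_card.
- move=> /= [->|[k [k1 [Hk HF]]]] H1 H2; first by left; rewrite imfset0.
  right; exists k; split => //; split; last exact: IH.
  move=> m /imfsetP [a aF ->]; exact: leq_trans (Hk a aF) (H1 a aF).
Qed.
Local Open Scope ring_scope.

Lemma fin_choice (T : Type) (d : T) (P : nat -> T -> Prop) r :
  (forall i, (i < r)%N -> exists t, P i t) -> exists f : nat -> T, forall i, (i < r)%N -> P i (f i).
Proof.
elim: r => [|r IH] H; first by exists (fun _ => d).
have [f Hf] := IH (fun i ir => H i (ltnW ir)).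
have [t Ht] := H r (ltnSn r).
exists (fun i => if i == r then t else f i) => i; rewrite ltnS leq_eqVlt.
by case: eqP => [-> //|_ /= ir]; apply: Hf.
Qed.

Lemma bound_fin r (P : nat -> nat -> Prop) :
  (forall i, (i < r)%N -> exists N, P i N) ->
  (forall i N N', P i N -> (N <= N')%N -> P i N') -> exists N, forall i, (i < r)%N -> P i N.
Proof.
move=> H Hm; elim: r H => [|r IH] H; first by exists 0%N.
have [N HN] := IH (fun i ir => H i (ltnW ir)).
have [N' HN'] := H r (ltnSn r).
exists (maxn N N') => i; rewrite ltnS leq_eqVlt => /orP [/eqP ->|ir].
  by apply: Hm HN' _; rewrite leq_maxr.
by apply: Hm (HN i ir) _; rewrite leq_maxl.
Qed.

Lemma seq_bound (s : seq nat) : exists N, forall l, l \in s -> (l < N)%N.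
Proof.
elim: s => [|a s [N HN]]; first by exists 0%N.
exists (maxn N a).+1 => l; rewrite inE => /orP [/eqP ->|/HN h]; rewrite ltnS.
  by rewrite leq_maxr.
by apply: leq_trans (ltnW h) _; rewrite leq_maxl.
Qed.

Lemma exists_min (E : {fset nat}) l : l \in E -> exists m, is_min m E.
Proof.
move=> lE; have ex : exists n, (fun x => x \in E) n by exists l.
case: (ex_minnP ex) => m mE mmin; by exists m; split.
Qed.

Lemma fsum_ord (R : realType) (f : nat -> R) (F : {fset nat}) N :
  supp_is f F -> (forall l, l \in F -> (l < N)%N) ->
  \sum_(l <- F) `|f l| = \sum_(l < N) `|f l|.
Proof.
move=> Hs HN.
rewrite -(big_mkord xpredT (fun l => `|f l|)).
rewrite [RHS](bigID (fun l => l \in F)) /= [X in _ + X]big1 ?addr0; last first.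
  by move=> l; rewrite Hs negbK => /eqP ->; rewrite normr0.
rewrite -[RHS]big_filter; apply: perm_big; apply: uniq_perm.
- exact: fset_uniq.
- by apply: filter_uniq; apply: iota_uniq.
- move=> l; rewrite mem_filter mem_index_iota /=.
  by case lF: (l \in F) => //=; rewrite HN.
Qed.

Lemma mlt_of r (m : nat -> nat) : (forall i, (i.+1 < r)%N -> (m i < m i.+1)%N) ->
  forall i j, (i < j)%N -> (j < r)%N -> (m i < m j)%N.
Proof.
move=> H i j; elim: j => [//|j IH] ij jr.
move: ij; rewrite ltnS leq_eqVlt => /orP [/eqP ->|ij]; first exact: H.
apply: ltn_trans (IH ij (ltnW jr)) (H j jr).
Qed.
Definition ConclP (R : realType) (theta : nat -> R) (p : nat -> nat) (eta : nat -> cord)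
  (M : nat -> pred nat) (k n : nat) (x : nat -> R) (y : nat -> nat -> R)
  (Fs : nat -> {fset nat}) : Prop :=
    (forall j, (j <= k)%N -> supp_is (y j) (Fs j)) /\
    (forall i j, (i <= k)%N -> (j <= k)%N -> i != j -> Fs i `&` Fs j = fset0) /\
    (forall l, x l = \sum_(j < k.+1) y j l) /\
    (forall j, (j <= k)%N -> \sum_(l <- Fs j) `|y j l| = (theta (p (n + j)))^-1) /\
    (forall j, (j <= k)%N ->
       iter_comp [seq schreier (OSucc (eta (n + i))) | i <- iota 0 j.+1] (Fs j) /\
       (forall l, l \in Fs j -> M (n + j) l)).

Lemma sum_single (R : realType) r (m : nat -> nat) (g : nat -> R) :
  (forall i j, (i < r)%N -> (j < r)%N -> m i = m j -> i = j) ->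
  forall i0, (i0 < r)%N -> \sum_(i < r | m i == m i0) g i = g i0.
Proof.
move=> minj i0 i0r; rewrite (bigD1 (Ordinal i0r)) //= big1 ?addr0 // => i /andP [/eqP e ne].
by move: ne; have := minj i i0 (ltn_ord i) i0r e => e'; rewrite (_ : i = Ordinal i0r) ?eqxx //; apply: val_inj.
Qed.

Lemma sum_single_nat r (m : nat -> nat) (g : nat -> nat) :
  (forall i j, (i < r)%N -> (j < r)%N -> m i = m j -> i = j) ->
  forall i0, (i0 < r)%N -> (\sum_(i < r | m i == m i0) g i)%N = g i0.
Proof.
move=> minj i0 i0r; rewrite (bigD1 (Ordinal i0r)) //= big1 ?addn0 // => i /andP [/eqP e ne].
by move: ne; have := minj i i0 (ltn_ord i) i0r e => e'; rewrite (_ : i = Ordinal i0r) ?eqxx //; apply: val_inj.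
Qed.
Lemma step (R : realType) (theta : nat -> R) (p : nat -> nat) (eta : nat -> cord)
  (M : nat -> pred nat) (c : nat -> R) (k n : nat) (x : nat -> R)
  (Hpos : forall n', (0 < n')%N -> 0 < theta (p n')) (n0 : (0 < n)%N)
  (r : nat) (a : nat -> R) (m : nat -> nat) (z : nat -> nat -> R) :
  (forall i, (i < r)%N -> exists y Fs, ConclP theta p eta M k n.+1 (z i) y Fs) ->
  (forall i, (i.+1 < r)%N -> (m i < m i.+1)%N) ->
  (forall i l, (i < r)%N -> z i l != 0 ->
          (m i < l)%N /\ ((i.+1 < r)%N -> (l < m i.+1)%N)) ->
  Zbase theta p eta M c n (fun l => (theta (p n))^-1 * \sum_(i < r | m i == l) a i) ->
  x = (fun l => (theta (p n))^-1 * \sum_(i < r | m i == l) a i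
                    + \sum_(i < r) a i * z i l) ->
  exists y Fs, ConclP theta p eta M k.+1 n x y Fs.
Proof.
move=> Hz Hm Hint Hb Hx.
have [YF HYF] := @fin_choice _ ((fun _ _ => 0), (fun _ => fset0))
   (fun i t => ConclP theta p eta M k n.+1 (z i) t.1 t.2) r
   (fun i ir => let: ex_intro y (ex_intro Fs H) := Hz i ir in ex_intro _ (y, Fs) H).
have {HYF Hz} [Y [FF HYF]] : exists (Y : nat -> nat -> nat -> R) (FF : nat -> nat -> {fset nat}),
   forall i, (i < r)%N -> ConclP theta p eta M k n.+1 (z i) (Y i) (FF i).
  by exists (fun i => (YF i).1), (fun i => (YF i).2).
have Ysupp : forall i j, (i < r)%N -> (j <= k)%N -> supp_is (Y i j) (FF i j).
  by move=> i j ir jk; apply: (HYF i ir).1.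
have FFdisj : forall i j j', (i < r)%N -> (j <= k)%N -> (j' <= k)%N -> j != j' ->
    FF i j `&` FF i j' = fset0.
  by move=> i j j' ir; apply: (HYF i ir).2.1.
have zsum : forall i l, (i < r)%N -> z i l = \sum_(j < k.+1) Y i j l.
  by move=> i l ir; apply: (HYF i ir).2.2.1.
have Ynorm : forall i j, (i < r)%N -> (j <= k)%N ->
    \sum_(l <- FF i j) `|Y i j l| = (theta (p (n.+1 + j)))^-1.
  by move=> i j ir; apply: (HYF i ir).2.2.2.1.
have Ysch : forall i j, (i < r)%N -> (j <= k)%N ->
    iter_comp [seq schreier (OSucc (eta (n.+1 + i))) | i <- iota 0 j.+1] (FF i j) /\
       (forall l, l \in FF i j -> M (n.+1 + j) l).
  by move=> i j ir; apply: (HYF i ir).2.2.2.2.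
clear HYF YF.
have mlt := mlt_of Hm.
have mle : forall i j, (i <= j)%N -> (j < r)%N -> (m i <= m j)%N.
  move=> i j; rewrite leq_eqVlt => /orP [/eqP ->//|ij jr]; exact/ltnW/mlt.
have minj : forall i j, (i < r)%N -> (j < r)%N -> m i = m j -> i = j.
  move=> i j ir jr e; case: (ltngtP i j) => // ij.
    by have := mlt i j ij jr; rewrite e ltnn.
  by have := mlt j i ij ir; rewrite e ltnn.
have zdisj : forall i i' l, (i < r)%N -> (i' < r)%N -> z i l != 0 -> z i' l != 0 -> i = i'.
  suff H : forall i i' l, (i < i')%N -> (i' < r)%N -> z i l != 0 -> z i' l != 0 -> False.
    move=> i i' l ir i'r z1 z2; case: (ltngtP i i') => // ii'; exfalso.
      exact: H z1 z2.
    exact: H z2 z1.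
  move=> i i' l ii' i'r z1 z2.
  have ir : (i < r)%N := ltn_trans ii' i'r.
  have [_ h1] := Hint i l ir z1; have [h2 _] := Hint i' l i'r z2.
  have := h1 (leq_ltn_trans ii' i'r); have := mle i.+1 i' ii' i'r; lia.
have zm : forall i i' l, (i < r)%N -> (i' < r)%N -> z i l != 0 -> m i' != l.
  move=> i i' l ir i'r zl; have [h1 h2] := Hint i l ir zl.
  case: (leqP i' i) => ii'.
    by have := mle i' i ii' ir; lia.
  by have := h2 (leq_ltn_trans ii' i'r); have := mle i.+1 i' ii' i'r; lia.
have Yz : forall i j l, (i < r)%N -> (j <= k)%N -> Y i j l != 0 -> z i l = Y i j l.
  move=> i j l ir jk Yl.
  have lFF : l \in FF i j by rewrite (Ysupp i j ir jk).
  have jk' : (j < k.+1)%N by [].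
  rewrite (zsum i l ir) (bigD1 (Ordinal jk')) //= big1 ?addr0 // => j' jne.
  have jne' : (j' : nat) != j by move: jne; apply: contra => /eqP e; apply/eqP/val_inj.
  case: (eqVneq (Y i j' l) 0) => // Hne; exfalso.
  have : l \in FF i j `&` FF i j' by rewrite in_fsetI lFF (Ysupp i j' ir (ltn_ord j')) Hne.
  by rewrite (FFdisj i j j' ir jk (ltn_ord j')) ?in_fset0 // eq_sym.

set th := theta (p n).
have hth : 0 < th := Hpos n n0.
have thn0 : th != 0 := lt0r_neq0 hth.
case: Hb => F0 [suppb [normb [schb [Mb _]]]].
pose b := fun l => th^-1 * \sum_(i < r | m i == l) a i.
have bval : forall i0, (i0 < r)%N -> b (m i0) = th^-1 * a i0.
  by move=> i0 i0r; rewrite /b sum_single.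
have bnone : forall l, (forall i, (i < r)%N -> m i != l) -> b l = 0.
  move=> l H; rewrite /b big1 ?mulr0 // => i /eqP e; by have := H i (ltn_ord i); rewrite e eqxx.
have F0char : forall l, l \in F0 <-> exists i, [/\ (i < r)%N, m i = l & a i != 0].
  move=> l; rewrite (suppb l); change (b l != 0 <-> exists i, [/\ (i < r)%N, m i = l & a i != 0]).
  case: (boolP [exists i : 'I_r, m i == l]) => [/existsP [i /eqP e]|/existsPn H].
    rewrite -e bval ?(ltn_ord i) // mulf_eq0 invr_eq0 (negbTE thn0) /=; split.
      by move=> ai; exists i.
    by case=> i' [i'r e' ai']; rewrite -(minj i' i i'r (ltn_ord i) e').
  rewrite bnone ?eqxx; last by move=> i ir; have := H (Ordinal ir).
  by split => // [[i [ir e _]]]; have := H (Ordinal ir); rewrite /= e eqxx.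
pose Sx := [seq i <- iota 0 r | a i != 0].
have memS : forall i, (i \in Sx) = (a i != 0) && (i < r)%N.
  by move=> i; rewrite mem_filter mem_iota add0n leq0n.
pose y := fun j => if j is j'.+1 then (fun l => \sum_(i < r) a i * Y i j' l) else b.
pose Fs := fun j => if j is j'.+1 then \bigcup_(i <- Sx) FF i j' else F0.
have FsP : forall j l, l \in Fs j.+1 <-> exists i, [/\ (i < r)%N, a i != 0 & l \in FF i j].
  move=> j l; split.
    by move=> /bigfcupP [i /andP [iS _] lF]; move: iS; rewrite memS => /andP [ai ir]; exists i.
  by case=> i [ir ai lF]; apply/bigfcupP; exists i => //; rewrite memS ai ir.
have Fschar : forall j l, (j <= k)%N ->
    (l \in Fs j.+1 <-> exists i, [/\ (i < r)%N, a i != 0 & Y i j l != 0]).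
  move=> j l jk; rewrite FsP; split; case=> i [ir ai H]; exists i; split => //.
    by rewrite -(Ysupp i j ir jk).
  by rewrite (Ysupp i j ir jk).
have Yuniq : forall j l i i0, (j <= k)%N -> (i < r)%N -> (i0 < r)%N ->
    Y i0 j l != 0 -> Y i j l != 0 -> i = i0.
  move=> j l i i0 jk ir i0r Y0 Y1; apply: (zdisj i i0 l ir i0r).
    by rewrite (Yz i j l ir jk Y1).
  by rewrite (Yz i0 j l i0r jk Y0).
have yval : forall j l i0, (j <= k)%N -> (i0 < r)%N -> Y i0 j l != 0 ->
    y j.+1 l = a i0 * Y i0 j l.
  move=> j l i0 jk i0r Y0 /=; rewrite (bigD1 (Ordinal i0r)) //= big1 ?addr0 // => i ne.
  case: (eqVneq (Y i j l) 0) => [->|Yi]; first by rewrite mulr0.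
  have e := Yuniq j l i i0 jk (ltn_ord i) i0r Y0 Yi.
  by move: ne; rewrite (_ : i = Ordinal i0r) ?eqxx //; apply: val_inj.
have yzero : forall j l, (forall i, (i < r)%N -> Y i j l = 0) -> y j.+1 l = 0.
  by move=> j l H /=; rewrite big1 // => i _; rewrite H ?mulr0.
have [N [HN0 HN]] : exists N, (forall l, l \in F0 -> (l < N)%N) /\
    (forall i, (i < r)%N -> (m i < N)%N /\ forall j, (j <= k)%N -> forall l, l \in FF i j -> (l < N)%N).
  have [N0 H0] := seq_bound F0.
  have [N1 H1] : exists N, forall i, (i < r)%N -> (m i < N)%N /\
      forall j, (j <= k)%N -> forall l, l \in FF i j -> (l < N)%N.
    apply: bound_fin => [i ir|i N N' [h1 h2] NN']; last first.
      split; first exact: leq_trans h1 NN'.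
      by move=> j jk l lF; apply: leq_trans (h2 j jk l lF) NN'.
    have [Ni HNi] : exists N, forall j, (j < k.+1)%N -> forall l, l \in FF i j -> (l < N)%N.
      apply: bound_fin => [j _|j N N' h NN' l lF]; last exact: leq_trans (h l lF) NN'.
      exact: seq_bound.
    exists (maxn Ni (m i).+1); split; first by rewrite leq_maxr.
    by move=> j jk l lF; apply: leq_trans (HNi j jk l lF) _; rewrite leq_maxl.
  exists (maxn N0 N1); split.
    by move=> l lF; apply: leq_trans (H0 l lF) _; rewrite leq_maxl.
  move=> i ir; have [h1 h2] := H1 i ir; split; first by apply: leq_trans h1 _; rewrite leq_maxr.
  by move=> j jk l lF; apply: leq_trans (h2 j jk l lF) _; rewrite leq_maxr.
have Gsupp : forall j, (j <= k.+1)%N -> supp_is (y j) (Fs j).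
  move=> [|j] jk; first exact: suppb.
  move=> l; case: (boolP [exists i : 'I_r, Y i j l != 0]) => [/existsP [i0 Y0]|/existsPn H].
    rewrite (yval j l i0 jk (ltn_ord i0) Y0) mulf_eq0 negb_or Y0 andbT.
    apply/idP/idP => [/(Fschar j l jk) [i [ir ai Yi]]|ai].
      by rewrite -(Yuniq j l i i0 jk ir (ltn_ord i0) Y0 Yi).
    by apply/(Fschar j l jk); exists i0.
  have H' : forall i, (i < r)%N -> Y i j l = 0.
    by move=> i ir; have := H (Ordinal ir); rewrite negbK => /eqP.
  rewrite yzero // eqxx; apply/negbTE/negP => /(Fschar j l jk) [i [ir _ Yi]].
  by move: Yi; rewrite H' ?eqxx.
have boundFs : forall j, (j <= k)%N -> forall l, l \in Fs j.+1 -> (l < N)%N.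
  move=> j jk l /FsP [i [ir _ lF]]; exact: (HN i ir).2 j jk l lF.

have absY : forall j l, (j <= k)%N -> `|y j.+1 l| = \sum_(i < r) `|a i| * `|Y i j l|.
  move=> j l jk.
  case: (boolP [exists i : 'I_r, Y i j l != 0]) => [/existsP [i0 Y0]|/existsPn H].
    rewrite (yval j l i0 jk (ltn_ord i0) Y0) normrM (bigD1 i0) //= big1 ?addr0 // => i ne.
    case: (eqVneq (Y i j l) 0) => [->|Yi]; first by rewrite normr0 mulr0.
    have e := Yuniq j l i i0 jk (ltn_ord i) (ltn_ord i0) Y0 Yi.
    by move: ne; rewrite (_ : i = i0) ?eqxx //; apply: val_inj.
  have H' : forall i, (i < r)%N -> Y i j l = 0.
    by move=> i ir; have := H (Ordinal ir); rewrite negbK => /eqP.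
  rewrite yzero // normr0 big1 // => i _; by rewrite H' // normr0 mulr0.
have suma1 : \sum_(i < r) `|a i| = 1.
  have e1 : \sum_(l < N) `|b l| = th^-1 by rewrite -(fsum_ord suppb HN0).
  have e2 : forall l, `|b l| = th^-1 * \sum_(i < r | m i == l) `|a i|.
    move=> l; case: (boolP [exists i : 'I_r, m i == l]) => [/existsP [i /eqP e]|/existsPn H].
      rewrite -e bval ?(ltn_ord i) // (@sum_single _ r m (fun i => `|a i|) minj i (ltn_ord i)).
      by rewrite normrM ger0_norm // invr_ge0 ltW.
    rewrite bnone ?normr0; last by move=> i ir; have := H (Ordinal ir).
    by rewrite big1 ?mulr0 // => i /eqP e; have := H i; rewrite e eqxx.
  have e3 : th^-1 * \sum_(l < N) \sum_(i < r | m i == l) `|a i| = th^-1.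
    rewrite -[RHS]e1 mulr_sumr; apply: eq_bigr => l _; by rewrite e2.
  have e4 : \sum_(l < N) \sum_(i < r | m i == l) `|a i| = \sum_(i < r) `|a i|.
    under eq_bigr do rewrite big_mkcond /=.
    rewrite exchange_big /=; apply: eq_bigr => i _.
    have mN : (m i < N)%N := (HN i (ltn_ord i)).1.
    rewrite (bigD1 (Ordinal mN)) //= eqxx big1 ?addr0 // => l ne.
    rewrite ifN //; apply: contra ne => /eqP e; apply/eqP/val_inj => /=; by rewrite e.
  apply: (mulfI (invr_neq0 thn0)); by rewrite mulr1 -e4 e3.
have eS : forall j, (n.+1 + j)%R = (n + j.+1)%R :> nat by move=> j; apply: addSnnS.
have e0 : (n + 0)%R = n :> nat by apply: addn0.
exists y, Fs; split; [exact: Gsupp|split; [|split; [|split]]].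
- move=> [|i] [|j] ik jk ij //; apply/fsetP => l; rewrite in_fsetI in_fset0;
    apply/negbTE/negP => /andP [h1 h2].
  + move/F0char: h1 => [i [ir e _]]; move/(Fschar j l jk): h2 => [i' [i'r _ Yi']].
    have := zm i' i l i'r ir; rewrite (Yz i' j l i'r jk Yi') Yi' e eqxx; by move/(_ isT).
  + move/F0char: h2 => [j [jr e _]]; move/(Fschar i l ik): h1 => [i' [i'r _ Yi']].
    have := zm i' j l i'r jr; rewrite (Yz i' i l i'r ik Yi') Yi' e eqxx; by move/(_ isT).
  + move/(Fschar i l ik): h1 => [u [ur _ Yu]]; move/(Fschar j l jk): h2 => [v [vr _ Yv]].
    have e : u = v.
      apply: (zdisj u v l ur vr); first by rewrite (Yz u i l ur ik Yu).
      by rewrite (Yz v j l vr jk Yv).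
    subst v.
    have : l \in FF u i `&` FF u j by rewrite in_fsetI (Ysupp u i ur ik) Yu (Ysupp u j ur jk) Yv.
    by rewrite (FFdisj u i j ur ik jk ij) in_fset0.
- move=> l; rewrite Hx big_ord_recl /=; congr (_ + _).
  rewrite (eq_bigr (fun j : 'I_k.+1 => \sum_(i < r) a i * Y i j l)); last first.
    by move=> j _.
  rewrite exchange_big; apply: eq_bigr => i _; by rewrite (zsum i l (ltn_ord i)) mulr_sumr.
- move=> [|j] jk; first by rewrite e0.
  rewrite (fsum_ord (Gsupp j.+1 jk) (boundFs j jk)).
  under eq_bigr do rewrite absY //.
  rewrite exchange_big /=.
  under eq_bigr => i _ do rewrite -mulr_sumr -(fsum_ord (Ysupp i j (ltn_ord i) jk) ((HN i (ltn_ord i)).2 j jk)) Ynorm ?(ltn_ord i) //.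
  by rewrite -mulr_suml suma1 mul1r eS.
- move=> [|j] jk.
    by rewrite /= e0; split => // l lF; apply: Mb.
  split; last first.
    move=> l /(Fschar j l jk) [i [ir _ Yi]]; rewrite -eS; apply: (Ysch i j ir jk).2.
    by rewrite (Ysupp i j ir jk).
  have FFne : forall i, (i < r)%N -> exists t, is_min t (FF i j).
    move=> i ir; case: (fset_0Vmem (FF i j)) => [e|[l lF]]; last exact: exists_min lF.
    exfalso; have := Ynorm i j ir jk; rewrite e big_seq_fset0 => h.
    have := Hpos (n.+1 + j)%N isT; rewrite lt0r => /andP [+ _].
    by rewrite -invr_eq0 -h eqxx.
  have [mu Hmu] := @fin_choice _ 0%N (fun i t => is_min t (FF i j)) r FFne.
  have muY : forall i, (i < r)%N -> Y i j (mu i) != 0.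
    by move=> i ir; rewrite -(Ysupp i j ir jk); exact: (Hmu i ir).1.
  have muz : forall i, (i < r)%N -> z i (mu i) != 0.
    by move=> i ir; rewrite (Yz i j (mu i) ir jk (muY i ir)) muY.
  pose A0 := schreier (OSucc (eta n)).
  pose L' := [seq schreier (OSucc (eta (n.+1 + i))) | i <- iota 0 j.+1].
  have eL : [seq schreier (OSucc (eta (n + i))) | i <- iota 0 j.+2] = A0 :: L'.
    rewrite /L' /A0.
    have -> : iota 0 j.+2 = 0%N :: map (addn 1) (iota 0 j.+1) by rewrite -iotaDl.
    rewrite map_cons -map_comp e0; congr (_ :: _); apply: eq_map => i.
    rewrite /comp; congr (schreier (OSucc (eta _))); change (n + (1 + i) = n.+1 + i)%N; lia.
  rewrite eL.
  suff key : compose A0 (iter_comp L') (Fs j.+1) by apply: (foldl_assoc key).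
  apply/compose_C2; exists [seq (mu i, FF i j) | i <- Sx]; split; [|split; [|split]].
  + move=> P HP; have [i iS ->] := elimT (@mapP _ _ (fun i => (mu i, FF i j)) Sx P) HP.
    move: iS; rewrite memS => /andP [_ ir]; split; first exact: Hmu.
    exact: (Ysch i j ir jk).1.
  + suff : pairwise (relpre (fun i => (mu i, FF i j)) (fun P Q : nat * {fset nat} => set_ltb P.2 Q.2)) Sx.
      by rewrite -pairwise_map.
    have pS : pairwise ltn Sx.
      apply: pairwise_filter; rewrite -sorted_pairwise; [exact: iota_ltn_sorted | exact: ltn_trans].
    apply: (@sub_in_pairwise _ (mem Sx) ltn _ _ Sx); last 1 [exact: pS]; last 1 [by apply/allP].
    move=> i i' iS i'S ii' /=; apply/set_ltP => u v uF vF.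
    move: i'S; rewrite memS => /andP [_ i'r]; have ir := ltn_trans ii' i'r.
    have zu : z i u != 0 by rewrite (Yz i j u ir jk) -(Ysupp i j ir jk).
    have zv : z i' v != 0 by rewrite (Yz i' j v i'r jk) -(Ysupp i' j i'r jk).
    have [_ h1] := Hint i u ir zu; have [h2 _] := Hint i' v i'r zv.
    have := h1 (leq_ltn_trans ii' i'r); have := mle i.+1 i' ii' i'r; lia.
  + move=> l; split.
    * move/FsP => [i [ir ai lF]]; exists (mu i, FF i j) => //.
      by apply: (@map_f _ _ (fun i => (mu i, FF i j))); rewrite memS ai ir.
    * case=> P HP lP; have [i iS eP] := elimT (@mapP _ _ (fun i => (mu i, FF i j)) Sx P) HP.
      move: iS lP; rewrite memS eP => /andP [ai ir] lF; apply/FsP; by exists i.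
  + have -> : [seq x.1 | x <- [seq (mu i, FF i j) | i <- Sx]] = map mu Sx by rewrite -map_comp.
    pose h := fun l => (\sum_(i < r | m i == l) mu i)%N.
    have hm : forall i, (i < r)%N -> h (m i) = mu i.
      by move=> i ir; rewrite /h (@sum_single_nat r m mu minj i ir).
    have mumu : forall i, (i < r)%N -> (m i < mu i)%N /\ ((i.+1 < r)%N -> (mu i < m i.+1)%N).
      by move=> i ir; exact: (Hint i (mu i) ir (muz i ir)).
    have -> : [fset m0 | m0 in map mu Sx] = h @` F0.
      apply/fsetP => v; rewrite inE; apply/mapP/imfsetP.
      * case=> i iS ->; move: (iS); rewrite memS => /andP [ai ir].
        exists (m i); last by rewrite hm.
        by apply/F0char; exists i.
      * case=> l /F0char [i [ir e ai]] ->; exists i; first by rewrite memS ai ir.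
        by rewrite -e hm.
    apply: spread => //.
    * move=> l /F0char [i [ir <- _]]; rewrite hm //; exact/ltnW/(mumu i ir).1.
    * move=> l l' /F0char [i [ir <- _]] /F0char [i' [i'r <- _]] ll'.
      rewrite !hm //.
      have ii' : (i < i')%N.
        case: (ltnP i i') => // h'; have := mle i' i h' ir; lia.
      have := (mumu i ir).2 (leq_ltn_trans ii' i'r); have := mle i.+1 i' ii' i'r.
      have := (mumu i' i'r).1; lia.
Qed.

Lemma mainind (R : realType) (theta : nat -> R) (p : nat -> nat) (eta : nat -> cord)
  (M : nat -> pred nat) (c : nat -> R)
  (Hpos : forall n', (0 < n')%N -> 0 < theta (p n')) k :
  forall n x, (0 < n)%N -> Zset theta p eta M c k n x ->
  exists y Fs, ConclP theta p eta M k n x y Fs.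
Proof.
elim: k => [|k IH] n x n0 /=.
- case=> F [supp [norm [sch [Mf _]]]].
  have e0 : (n + 0)%R = n :> nat by apply: addn0.
  exists (fun _ => x), (fun _ => F); split; [|split; [|split; [|split]]].
  + by move=> j _.
  + by move=> [|i] [|j].
  + by move=> l; rewrite big_ord1.
  + by move=> [|j] // _; rewrite e0.
  + move=> [|j] // _; rewrite /= e0; split => //.
- case=> r [a [m [z [Hz [Hm [Hint [Hb Hx]]]]]]].
  apply: (step Hpos n0 _ Hm Hint Hb Hx) => i ir; apply: IH => //; exact: Hz.
Qed.

Unset Implicit Arguments.
Set Strict Implicit.

Theorem proposition9 (R : realType) (theta : nat -> R) (eps : R)
    (p q : nat -> nat) (eta : nat -> cord) (M : nat -> pred nat) (c : nat -> R) :
  (forall n, (0 < n)%N -> 0 < theta n < 1) ->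
  (forall n, (0 < n)%N -> theta n.+1 <= theta n) ->
  (forall e : R, 0 < e -> exists N, forall n, (N <= n)%N -> theta n < e) ->
  0 < eps < 1 ->
  (0 < p 1)%N ->
  (forall n, (0 < n)%N -> (p n < q n)%N /\ (q n < p n.+1)%N) ->
  (forall n, (0 < n)%N -> theta (p n) <= eps ^+ 2 / 4%:R ^+ n) ->
  (forall n, (0 < n)%N -> theta (q n) <= eps * theta (p n) / 4%:R ^+ n) ->
  (forall n N, exists m, (N <= m)%N /\ M n m) ->
  (forall n l, M n.+1 l -> M n l) ->
  (forall n, (0 < n)%N -> 0 < c n <= (4%:R ^+ n)^-1) ->
  forall (n k : nat) (x : nat -> R), (0 < n)%N ->
  Zset theta p eta M c k n x ->
  exists (y : nat -> nat -> R) (Fs : nat -> {fset nat}),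
    (forall j, (j <= k)%N -> supp_is (y j) (Fs j)) /\
    (forall i j, (i <= k)%N -> (j <= k)%N -> i != j -> Fs i `&` Fs j = fset0) /\
    (forall l, x l = \sum_(j < k.+1) y j l) /\
    (forall j, (j <= k)%N -> \sum_(l <- Fs j) `|y j l| = (theta (p (n + j)))^-1) /\
    (forall j, (j <= k)%N ->
       iter_comp [seq schreier (OSucc (eta (n + i))) | i <- iota 0 j.+1] (Fs j) /\
       (forall l, l \in Fs j -> M (n + j) l)).
Proof.
move=> Hth _ _ _ Hp1 Hpq _ _ _ _ _ n k x n0 HZ.
have Hpos : forall n', (0 < n')%N -> 0 < theta (p n').
  move=> [|[|n']] // _; first by have /andP [] := Hth (p 1%N) Hp1.
  have [_ h] := Hpq n'.+1 isT.
  have /andP [] // := Hth (p n'.+2) (leq_ltn_trans (leq0n _) h).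
have [y [Fs H]] := @mainind _ _ _ _ _ _ Hpos k n x n0 HZ; exists y, Fs; exact: H.
Qed.
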